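(* Let $u,v$ be two different essential vertices of a multigraph $H$, and let $P$ be any simple path in $H$ from $u$ to $v$. Then every edge traversed by $P$ is essential.
   Context: Multigraphs are undirected and may contain parallel edges and self-loops (a self-loop is a cycle of length one, two parallel edges form a cycle of length two). An edge $e$ of $H$ is essential if it lies on a cycle of $H$, or it is a bridge whose removal creates two new connected components each containing a cycle. An incidence is a pair $(u,e)$ with $e$ incident to $u$, a self-loop at $u$ giving two incidences. A vertex is essential if it participates in at least three incidences with essential edges. *)

(* Defs.v *)
(* Finite multigraphs: vertex type V, edge type E (both finite),
   each edge e has an (unordered) pair of endpoints [ends e]; a self-loop at u
   has ends e = (u, u). Parallel edges are distinct elements of E with the same ends. *)
From mathcomp Require Import all_boot.
From mathcomp Require Import boolp.
Set Implicit Arguments. Unset Strict Implicit. Unset Printing Implicit Defensive.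

Section Multigraph.
Variables (V E : finType) (ends : E -> V * V).

Definition link (e : E) (x y : V) : bool :=
  (ends e == (x, y)) || (ends e == (y, x)).

Fixpoint walk (ok : pred E) (x : V) (p : seq (E * V)) : bool :=
  match p with
  | [::] => true
  | (e, y) :: p' => [&& ok e, link e x y & walk ok y p']
  end.

Definition target (x : V) (p : seq (E * V)) : V := last x (map snd p).

(* A self-loop is a cycle of
   length one; two parallel edges form a cycle of length two. *)
Definition is_cycle (ok : pred E) (x : V) (p : seq (E * V)) : bool :=
  [&& walk ok x p, p != [::], target x p == x,
      uniq (map fst p) & uniq (map snd p)].

Definition on_cycle (e : E) : Prop :=
  exists x p, is_cycle predT x p /\ e \in map fst p.

Definition connected_in (ok : pred E) (a b : V) : Prop :=
  exists p, walk ok a p /\ target a p = b.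

Definition comp_has_cycle (ok : pred E) (a : V) : Prop :=
  exists x p, is_cycle ok x p /\ connected_in ok a x.

Definition cyclic_bridge (e : E) : Prop :=
  let ok := predC1 e in
  let a := (ends e).1 in let b := (ends e).2 in
  [/\ a != b, ~ connected_in ok a b, comp_has_cycle ok a & comp_has_cycle ok b].

Definition essential_edge (e : E) : Prop := on_cycle e \/ cyclic_bridge e.

(* number of incidences (u, e) with e essential; a self-loop counts twice *)
Definition ess_incidences (u : V) : nat :=
  \sum_(e : E | `[< essential_edge e >]) (((ends e).1 == u) + ((ends e).2 == u)).

Definition essential_vertex (u : V) : Prop := 3 <= ess_incidences u.

Definition simple_path (u v : V) (p : seq (E * V)) : bool :=
  [&& walk predT u p, target u p == v & uniq (u :: map snd p)].

End Multigraph.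

(* Main.v *)
Require Import Defs.
From mathcomp Require Import all_boot.
From mathcomp Require Import boolp.
From mathcomp Require Import zify.
Set Implicit Arguments. Unset Strict Implicit. Unset Printing Implicit Defensive.

Section Aux.
Variables (V E : finType) (ends : E -> V * V).
Implicit Types (ok : pred E) (x y t : V) (g : E) (p q : seq (E * V)).

Local Notation walk := (walk ends).
Local Notation link := (link ends).
Local Notation conn := (connected_in ends).

Lemma target_cat (x : V) (p q : seq (E * V)) : target x (p ++ q) = target (target x p) q.
Proof. by rewrite /target map_cat last_cat. Qed.

Lemma walk_cat ok x p q : walk ok x (p ++ q) = walk ok x p && walk ok (target x p) q.
Proof. elim: p x => [|[g y] p IH] x //=. by rewrite IH !andbA. Qed.

Lemma walk_sub (ok ok' : pred E) x p : walk ok x p -> (forall g, g \in map fst p -> ok' g) -> walk ok' x p.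
Proof.
elim: p x => [|[g y] p IH] x //= /and3P [_ hl hw] H.
rewrite H ?mem_head // hl /=. apply: IH => // h hh; apply: H; by rewrite in_cons hh orbT.
Qed.

Lemma walk_ok ok x p g : walk ok x p -> g \in map fst p -> ok g.
Proof.
elim: p x => [|[h y] p IH] x //= /and3P [hok _ hw]. rewrite in_cons => /orP [/eqP -> //|]. exact: IH hw.
Qed.

Lemma link_sym g x y : link g x y = link g y x.
Proof. by rewrite /link orbC. Qed.

Lemma conn_refl ok x : conn ok x x.
Proof. by exists [::]. Qed.

Lemma conn_step ok g x y t : ok g -> link g x y -> conn ok y t -> conn ok x t.
Proof. move=> hg hl [p [hw ht]]; exists ((g, y) :: p); split; [by rewrite /= hg hl hw | exact: ht]. Qed.

Lemma conn_trans ok x y t : conn ok x y -> conn ok y t -> conn ok x t.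
Proof.
move=> [p [hp <-]] [q [hq <-]]; exists (p ++ q); split; [by rewrite walk_cat hp hq | by rewrite target_cat].
Qed.

Lemma conn_sym ok x y : conn ok x y -> conn ok y x.
Proof.
move=> [p [hw <-]]; elim: p x hw => [|[g z] p IH] x hw; first exact: conn_refl.
case/and3P: hw => hg hl hw.
apply: (conn_trans (IH z hw)).
apply: (conn_step hg _ (conn_refl ok x)); by rewrite link_sym.
Qed.

Lemma conn_ends ok x p g : walk ok x p -> g \in map fst p ->
  conn ok x (ends g).1 /\ conn ok x (ends g).2.
Proof.
elim: p x => [|[h y] p IH] x //= /and3P [hok hl hw]; rewrite in_cons => /orP [/eqP ->|hg].
- have hy : conn ok x y by apply: (conn_step hok hl); exact: conn_refl.
  move: hl; rewrite /link => /orP [] /eqP ->; split => //=; exact: conn_refl.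
- have [h1 h2] := IH y hw hg. split; exact: conn_step hok hl _.
Qed.

Lemma ends_in ok x p g : walk ok x p -> g \in map fst p ->
  ((ends g).1 \in x :: map snd p) && ((ends g).2 \in x :: map snd p).
Proof.
elim: p x => [|[h y] p IH] x //= /and3P [hok hl hw]; rewrite in_cons => /orP [/eqP ->|hg].
- by move: hl; rewrite /link => /orP [] /eqP -> /=; rewrite !in_cons !eqxx ?orbT.
- by case/andP: (IH y hw hg) => h1 h2; rewrite in_cons h1 orbT in_cons h2 orbT.
Qed.

Lemma uniq_edges ok x p : walk ok x p -> uniq (x :: map snd p) -> uniq (map fst p).
Proof.
elim: p x => [|[g y] p IH] x //= /and3P [hok hl hw] /andP [hx hu].
rewrite (IH y hw hu) andbT.
apply/negP => hg; have /andP [h1 h2] := ends_in hw hg.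
move: hl; rewrite /link => /orP [] /eqP he; rewrite he /= in h1 h2.
- by rewrite h1 in hx.
- by rewrite h2 in hx.
Qed.

Definition adj (ok : pred E) : rel V := fun x y => [exists g, ok g && link g x y].

Lemma walk_path ok x p : walk ok x p -> path (adj ok) x (map snd p).
Proof.
elim: p x => [|[g y] p IH] x //= /and3P [hok hl hw]. rewrite IH // andbT.
apply/existsP; exists g; by rewrite hok hl.
Qed.

Lemma path_walk ok x s : path (adj ok) x s -> exists p, walk ok x p /\ map snd p = s.
Proof.
elim: s x => [|y s IH] x /=; first by exists [::].
case/andP => /existsP [g /andP [hg hl]] /IH [p [hw hs]].
exists ((g, y) :: p); split; [by rewrite /= hg hl hw | by rewrite /= hs].
Qed.

Lemma walk_simple ok x p : walk ok x p -> exists q,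
  [/\ walk ok x q, target x q = target x p & uniq (x :: map snd q)].
Proof.
move=> /walk_path hp. rewrite {2}/target. case: (shortenP hp) => s' hs' hu _.
have [q [hq hqs]] := path_walk hs'. exists q; split => //.
by rewrite /target hqs. by rewrite hqs.
Qed.


Lemma cycle_sub (ok ok' : pred E) x q : is_cycle ends ok x q ->
  (forall g, g \in map fst q -> ok' g) -> is_cycle ends ok' x q.
Proof.
case/and5P => hw h1 h2 h3 h4 H; apply/and5P; split => //; exact: walk_sub hw H.
Qed.

Lemma avoid_sub e (ok : pred E) x q : walk ok x q -> e \notin map fst q ->
  walk (predC1 e) x q.
Proof.
move=> hw he; apply: walk_sub hw _ => g hg /=; apply/eqP => ge; move: he; by rewrite -ge hg.
Qed.

Lemma not_conn_ends e : ~ on_cycle ends e -> ~ conn (predC1 e) (ends e).1 (ends e).2.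
Proof.
move=> hoc [p0 [hw0 ht0]]. have [q [hq hqt hqu]] := walk_simple hw0. rewrite ht0 in hqt.
apply hoc; exists (ends e).2, ((e, (ends e).1) :: q); split; last exact: mem_head.
have hl : link e (ends e).2 (ends e).1.
  by rewrite /link; case: (ends e) => a b /=; rewrite !eqxx orbT.
apply/and5P; split => //=.
- by rewrite hl /=; apply: walk_sub hq _.
- by apply/eqP.
- apply/andP; split; last exact: uniq_edges hq hqu. apply/negP => /(walk_ok hq) /=; by rewrite eqxx.
Qed.

Lemma key e z c : essential_vertex ends z -> ~ on_cycle ends e ->
  conn (predC1 e) c z -> ~ comp_has_cycle ends (predC1 e) c -> False.
Proof.
move=> hz hoc hcz hnc.
have H0 : forall f, f != e -> essential_edge ends f ->
    ((ends f).1 == z) + ((ends f).2 == z) = 0.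
  move=> f hfe hess.
  case: (boolP (((ends f).1 == z) || ((ends f).2 == z))) => hzf; last first.
    by case/norP: hzf => /negbTE -> /negbTE ->.
  exfalso.
  have [w hl] : exists w, link f z w.
    rewrite /link; case: (ends f) hzf => c1 d1 /= /orP [] /eqP ->;
      [exists d1 | exists c1]; by rewrite eqxx ?orbT.
  have hw : walk (predC1 e) z [:: (f, w)] by rewrite /= hl hfe.
  have [h1 h2] := conn_ends hw (mem_head f _).
  have r1 := conn_trans hcz h1; have r2 := conn_trans hcz h2.
  case: hess => [[x0 [q [hcyc hfq]]] | [hne hnb hc1 hc2]].
  - have heq : e \notin map fst q by apply/negP => heq; apply: hoc; exists x0, q.
    have hcyc' : is_cycle ends (predC1 e) x0 q.
      apply: (cycle_sub hcyc) => g hg /=; apply/eqP => ge; move: heq; by rewrite -ge hg.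
    apply: hnc; exists x0, q; split => //.
    case/and5P: hcyc' => hw0 _ _ _ _.
    exact: conn_trans r1 (conn_sym (conn_ends hw0 hfq).1).
  - have S : forall t, conn (predC1 e) c t -> comp_has_cycle ends (predC1 f) t ->
        conn (predC1 f) t (ends e).1.
      move=> t hct [x1 [q1 [hcyc [r [hr hrt]]]]].
      case: (boolP (e \in map fst q1)) => heq1.
        exfalso; apply: hoc; exists x1, q1; split => //; exact: cycle_sub hcyc _.
      case: (boolP (e \in map fst r)) => her; first exact: (conn_ends hr her).1.
      exfalso; apply: hnc; exists x1, q1; split.
        apply: (cycle_sub hcyc) => g hg /=; apply/eqP => ge; move: heq1; by rewrite -ge hg.
      apply: conn_trans hct _; exists r; split => //; exact: avoid_sub hr her.
    apply: hnb; apply: conn_trans (S _ r1 hc1) (conn_sym (S _ r2 hc2)).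
have : ess_incidences ends z <= 2.
  rewrite /ess_incidences big_mkcond (bigD1 e) //= big1 ?addn0.
    by case: asboolP => _ //; case: (_ == z); case: (_ == z).
  move=> f hfe; case: asboolP => // hess; exact: H0 hfe hess.
by rewrite leqNgt hz.
Qed.


Lemma split_edge e p : e \in map fst p -> exists p1 y p2, p = p1 ++ (e, y) :: p2.
Proof.
elim: p => [|[g y] p IH] //=; rewrite in_cons => /orP [/eqP ->|/IH [p1 [y' [p2 ->]]]].
- by exists [::], y, p.
- by exists ((g, y) :: p1), y', p2.
Qed.

End Aux.

Theorem lemma5p3 (V E : finType) (ends : E -> V * V) (u v : V)
  (p : seq (E * V)) :
  u != v ->
  essential_vertex ends u -> essential_vertex ends v ->
  simple_path ends u v p ->
  forall e, e \in map fst p -> essential_edge ends e.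
Proof.
move=> huv hu hv /and3P [hw ht huq] e he.
have [p1 [y [p2 hp]]] := split_edge he; subst p.
have hue := uniq_edges hw huq.
rewrite map_cat cat_uniq /= in hue.
case/and3P: hue => _ /norP [he1 _] /andP [he2 _].
move: hw; rewrite walk_cat => /andP [hw1 /and3P [_ hl hw2]].
move: ht; rewrite target_cat => /eqP ht.
set x := target u p1 in hl ht.
have hux : connected_in ends (predC1 e) u x by exists p1; split => //; exact: avoid_sub hw1 he1.
have hyv : connected_in ends (predC1 e) y v by exists p2; split => //; exact: avoid_sub hw2 he2.
case: (pselect (on_cycle ends e)) => hoc; [by left | right].
have hcomp : forall c, c = x \/ c = y -> comp_has_cycle ends (predC1 e) c.
  move=> c hc; case: (pselect (comp_has_cycle ends (predC1 e) c)) => // hn; exfalso.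
  case: hc => hc; subst c.
  - exact: key hu hoc (conn_sym hux) hn.
  - exact: key hv hoc hyv hn.
have hxy : x != y.
  move: huq; rewrite map_cat -cat_cons cat_uniq => /and3P [_ hn _].
  apply/eqP => hxy; move: hn; rewrite /= -hxy.
  by rewrite /x /target mem_last.
have hnc := not_conn_ends hoc.
move: hl hnc; rewrite /link /cyclic_bridge => /orP [] /eqP -> /= hnc;
  split => //; try (apply: hcomp; by [left|right]); by rewrite eq_sym.
Qed.
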